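(* If there exists a projective plane of order $s\ge2$ (equivalently a Steiner system $S(2,s+1,s^2+s+1)$), then $q''_0(2,s+1,s^2+s+1)=s^2+1$; that is, the smallest $q$ for which there exists an $(s^2+s+1,\,s^2,\,s^2+s)_q$ code of size $s^2+s+1$ is $s^2+1$.
   Context: $\mathbb{Z}_q=\{0,\dots,q-1\}$ (an alphabet); $\mathrm{wt}$ = number of nonzero coordinates; $d$ = Hamming distance; $J_q(n,w)$ = weight-$w$ words of $\mathbb{Z}_q^n$. An $(n,w,d)_q$ code of size $M$ is a subset $C\subseteq J_q(n,w)$ with $|C|=M$ and pairwise distances at least $d$. A Steiner system $S(t,k,n)$ is a pair $(N,B)$, $|N|=n$, $B$ a set of $k$-subsets (blocks) with every $t$-subset in exactly one block. For $t,k,n$ such that an $S(t,k,n)$ exists, $q''_0(t,k,n)$ is the smallest $q$ for which an $(n,n-k,n-t+1)_q$ code of size $\binom{n}{t}/\binom{k}{t}$ exists. *)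

(* Defs.v *)
From mathcomp Require Import all_boot.
Unset Printing Implicit Defensive.

Definition word (q n : nat) := {ffun 'I_n -> 'I_q}.

Definition wt {q n : nat} (x : word q n) : nat := #|[set i | nat_of_ord (x i) != 0]|.

Definition hdist {q n : nat} (x y : word q n) : nat := #|[set i | x i != y i]|.

Definition is_code (q n w d M : nat) (C : {set word q n}) : Prop :=
  #|C| = M /\
  (forall x, x \in C -> wt x = w) /\
  (forall x y, x \in C -> y \in C -> x != y -> (d <= hdist x y)%N).

Definition code_exists (q n w d M : nat) : Prop :=
  exists C : {set word q n}, is_code q n w d M C.

Definition steiner_system (t k n : nat) (B : {set {set 'I_n}}) : Prop :=
  (forall b, b \in B -> #|b| = k) /\
  (forall T : {set 'I_n}, #|T| = t -> exists! b, b \in B /\ T \subset b).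

Definition is_q0pp (t k n m : nat) : Prop :=
  code_exists m n (n - k) (n - t + 1) ('C(n, t) %/ 'C(k, t)) /\
  (forall q, q < m -> ~ code_exists q n (n - k) (n - t + 1) ('C(n, t) %/ 'C(k, t))).

(* Main.v *)
Require Import Defs.
From mathcomp Require Import all_boot zify.


Lemma card_sumP (T : finType) (A : {set T}) : #|A| = \sum_i (i \in A).
Proof. by rewrite -sum1_card big_mkcond /=; apply: eq_bigr => i _; case: (i \in A). Qed.

Lemma lower_bound (n q s : nat) (C : {set word q n}) : n = s^2 + s + 1 ->
  #|C| = n -> (forall x, x \in C -> wt x = s^2) ->
  (forall x y, x \in C -> y \in C -> x != y -> n - 1 <= hdist x y) -> s^2 + 1 <= q.
Proof.
move=> hn hC hw hd.
case: q C hC hw hd => [|q'] C hC hw hd.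
  have : 0 < #|C| by rewrite hC hn; lia.
  case/card_gt0P => x _.
  have i0 : 'I_n by apply: (@Ordinal n 0); rewrite hn; lia.
  by case: (x i0).
pose c i (a : 'I_q'.+1) := \sum_(x in C) (x i == a).
pose f (a : 'I_q'.+1) := if val a == 0 then s + 1 else 1.
have H1 : forall i (h : 'I_q'.+1 -> nat), \sum_a c i a * h a = \sum_(x in C) h (x i).
  move=> i h; rewrite /c.
  under eq_bigr => a _ do rewrite big_distrl /=.
  rewrite exchange_big /=; apply: eq_bigr => x _.
  rewrite (bigD1 (x i)) //= eqxx mul1n big1 ?addn0 // => a /negbTE.
  by rewrite eq_sym => ->.
have H2 : \sum_i \sum_a c i a * c i a =
   \sum_(x in C) \sum_(y in C) \sum_i (y i == x i).
  under eq_bigr => i _ do rewrite H1.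
  rewrite exchange_big /=; apply: eq_bigr => x _.
  by rewrite exchange_big.
have H3 : forall x y, x \in C -> y \in C ->
    \sum_i (y i == x i) <= if x == y then n else 1.
  move=> x y hx hy; case: eqP => [->|/eqP hxy].
    by rewrite (eq_bigr (fun _ => 1)) ?sum1_card ?card_ord // => i _; rewrite eqxx.
  have hs : \sum_i (y i == x i) + hdist x y = n.
    rewrite /hdist card_sumP -big_split /=.
    rewrite -[n in _ = n]card_ord -sum1_card; apply: eq_bigr => i _.
    by rewrite inE eq_sym; case: (x i == y i).
  have := hd x y hx hy hxy; lia.
have H4 : \sum_i \sum_a c i a * c i a <= n * (2 * n - 1).
  rewrite H2.
  apply: (@leq_trans (\sum_(x in C) \sum_(y in C) (if x == y then n else 1))).
    by apply: leq_sum => x hx; apply: leq_sum => y hy; exact: H3.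
  have -> : \sum_(x in C) \sum_(y in C) (if x == y then n else 1) =
            \sum_(x in C) (n + (n - 1)).
    apply: eq_bigr => x hx; rewrite (bigD1 x) //= eqxx.
    rewrite (eq_bigr (fun _ => 1)); last by move=> y /andP [_ /negbTE]; rewrite eq_sym => ->.
    have -> : \sum_(i in C | i != x) 1 = #|C :\ x|.
      by rewrite -sum1_card; apply: eq_bigl => y; rewrite !inE andbC.
    by have := cardsD1 x C; rewrite hC hx; lia.
  rewrite sum_nat_const hC; lia.
have H5 : \sum_a f a * f a = (s + 1) * (s + 1) + q'.
  rewrite big_ord_recl /f /=.
  by rewrite (eq_bigr (fun _ => 1)) // sum1_card card_ord.
have H6 : forall i, 2 * \sum_a c i a * f a <= \sum_a c i a * c i a + \sum_a f a * f a.
  move=> i; rewrite big_distrr -big_split /=; apply: leq_sum => a _; move: (c i a) (f a) => u v; case: (leqP u v) => h; [move: (subnKC h) | move: (subnKC (ltnW h))]; move: (v - u) (u - v) => d e <-; nia.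
have H7 : \sum_i \sum_a c i a * f a = n * ((s + 1) * (s + 1) + s ^ 2).
  under eq_bigr => i _ do rewrite H1.
  rewrite exchange_big /=.
  rewrite (eq_bigr (fun _ => (s + 1) * (s + 1) + s ^ 2)) ?sum_nat_const ?hC //.
  move=> x hx.
  have hwx := hw x hx.
  have hsum : \sum_i (val (x i) == 0) + wt x = n.
    rewrite /wt card_sumP -big_split /=.
    rewrite -[n in _ = n]card_ord -sum1_card; apply: eq_bigr => i _.
    by rewrite inE; case: (val (x i) == 0).
  have -> : \sum_i f (x i) = (s + 1) * \sum_i (val (x i) == 0) + wt x.
    rewrite /wt card_sumP big_distrr -big_split /=; apply: eq_bigr => i _.
    rewrite inE /f; case: (val (x i) == 0) => /=; lia.
  rewrite hwx in hsum *.
  have -> : \sum_i (val (x i) == 0) = s + 1 by lia.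
  done.
have H8 : \sum_i (2 * \sum_a c i a * f a) <=
          \sum_i (\sum_a c i a * c i a + \sum_a f a * f a) by apply: leq_sum => i _; exact: H6.
rewrite -big_distrr big_split /= H7 H5 sum_nat_const card_ord in H8.
move: H4 H8; move: (\sum_i \sum_a c i a * c i a) => S H4 H8.
have H9 : 2 * (n * ((s + 1) * (s + 1) + s ^ 2)) <= n * (2 * n - 1) + n * ((s + 1) * (s + 1) + q').
  by apply: leq_trans H8 _; rewrite leq_add2r.
rewrite mulnCA -mulnDr leq_pmul2l in H9; last by rewrite hn; lia.
lia.
Qed.

Section Steiner.
Variables (n s : nat) (hn : n = s ^ 2 + s + 1) (hs : 2 <= s)
  (B : {set {set 'I_n}}) (hB : steiner_system 2 (s + 1) n B).

Lemma bin2_eq m : 2 * 'C(m, 2) = m * m.-1.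
Proof. by rewrite (mul_bin_left m 1) bin1 subn1 mulnC. Qed.

Lemma F1 b b' : b \in B -> b' \in B -> b != b' -> #|b :&: b'| <= 1.
Proof.
move=> hb hb' hne; rewrite leqNgt; apply/negP => h2.
have : 0 < #|b :&: b'| by lia.
case/card_gt0P => x hx.
have : 0 < #|(b :&: b') :\ x| by have := cardsD1 x (b :&: b'); rewrite hx; lia.
case/card_gt0P => y; rewrite !inE => /and3P [hyx hyb hyb'].
move: hx; rewrite inE => /andP [hxb hxb'].
have hT : #|[set x; y]| = 2 by rewrite cards2 eq_sym hyx.
case: (hB.2 _ hT) => b0 [_ hu].
have s1 : [set x; y] \subset b by apply/subsetP => z; rewrite !inE => /orP [] /eqP ->.
have s2 : [set x; y] \subset b' by apply/subsetP => z; rewrite !inE => /orP [] /eqP ->.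
have e1 := hu b (conj hb s1).
have e2 := hu b' (conj hb' s2).
by move/eqP: hne; apply; rewrite -e1 -e2.
Qed.

Lemma Ceq : 'C(n, 2) = n * 'C(s + 1, 2).
Proof.
have h1 := bin2_eq n; have h2 := bin2_eq (s + 1).
have : 2 * 'C(n, 2) = 2 * (n * 'C(s + 1, 2)).
  rewrite h1 mulnCA h2 hn; rewrite addn1 /=; nia.
by move/eqP; rewrite eqn_pmul2l // => /eqP.
Qed.

Lemma F2 : #|B| = n.
Proof.
pose P2 := [set T : {set 'I_n} | #|T| == 2].
have e1 : \sum_(T in P2) \sum_(b in B) (T \subset b) = 'C(n, 2).
  rewrite -[X in _ = 'C(X, 2)]card_ord -card_draws -sum1_card.
  apply: eq_bigr => T; rewrite inE => /eqP hT.
  case: (hB.2 _ hT) => b0 [[hb0 hTb0] hu].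
  rewrite (bigD1 b0) //= hTb0 big1 // => b /andP [hb hne].
  case: (boolP (T \subset b)) => // hTb.
  by move/eqP: hne; case; rewrite (hu b (conj hb hTb)).
have e2 : \sum_(T in P2) \sum_(b in B) (T \subset b) = #|B| * 'C(s + 1, 2).
  rewrite exchange_big /= -sum_nat_const; apply: eq_bigr => b hb.
  rewrite -(hB.1 b hb) -cards_draws card_sumP big_mkcond /=.
  by apply: eq_bigr => T _; rewrite !inE andbC; case: (#|T| == 2); case: (T \subset b).
have : #|B| * 'C(s + 1, 2) = n * 'C(s + 1, 2) by rewrite -e2 e1 Ceq.
by move/eqP; rewrite eqn_pmul2r ?bin_gt0 //; [move/eqP | lia].
Qed.

Lemma F3 (p : 'I_n) : s + 1 <= #|B :&: [set b : {set 'I_n} | p \in b]|.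
Proof.
set Bp := B :&: [set b : {set 'I_n} | p \in b].
have h1 : n - 1 <= \sum_r \sum_(b in Bp) (r \in b :\ p).
  have -> : n - 1 = \sum_r (r != p).
    rewrite -[n in n - 1]card_ord subn1 -(cardsC1 p) card_sumP.
    by apply: eq_bigr => r _; rewrite !inE.
  apply: leq_sum => r _; case: (boolP (r != p)) => //= hrp.
  have hT : #|[set p; r]| = 2 by rewrite cards2 eq_sym hrp.
  case: (hB.2 _ hT) => b0 [[hb0 hTb0] _].
  have hp : p \in b0 by apply: (subsetP hTb0); rewrite !inE eqxx.
  have hr : r \in b0 by apply: (subsetP hTb0); rewrite !inE eqxx orbT.
  rewrite (bigD1 b0) /=; last by rewrite !inE hb0 hp.
  by rewrite !inE hrp hr.
have h2 : \sum_r \sum_(b in Bp) (r \in b :\ p) = #|Bp| * s.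
  rewrite exchange_big /= -sum_nat_const; apply: eq_bigr => b.
  rewrite !inE => /andP [hb hp].
  rewrite -card_sumP; have := cardsD1 p b; rewrite hp (hB.1 b hb) /=. by move=> h; apply/eqP; rewrite -(eqn_add2l 1) -h addnC.
rewrite h2 in h1.
have hn1 : n - 1 = (s + 1) * s by rewrite hn; nia.
have : (s + 1) * s <= #|Bp| * s by rewrite -hn1.
by rewrite leq_pmul2r //; lia.
Qed.

Lemma F4 (p : 'I_n) : #|B :\: [set b : {set 'I_n} | p \in b]| <= s ^ 2.
Proof. have := cardsID [set b : {set 'I_n} | p \in b] B; have := F3 p; rewrite F2; move: (#|B :&: _|) (#|B :\: _|) => u v; lia. Qed.


Definition Lp (p : 'I_n) := B :\: [set b : {set 'I_n} | p \in b].
Definition cwv (b : {set 'I_n}) (p : 'I_n) : nat :=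
  if p \in b then 0 else (index b (enum (Lp p))).+1.
Definition cw (b : {set 'I_n}) : word (s ^ 2).+1 n := [ffun p => inord (cwv b p)].

Lemma cwv_le b p : b \in B -> cwv b p <= s ^ 2.
Proof.
move=> hb; rewrite /cwv; case: ifP => // hp.
have hbL : b \in enum (Lp p) by rewrite mem_enum !inE hp hb.
have h4 : #|Lp p| <= s ^ 2 := F4 p.
rewrite cardE in h4; rewrite -index_mem in hbL; exact: leq_trans hbL h4.
Qed.

Lemma cwE b p : b \in B -> nat_of_ord (cw b p) = cwv b p.
Proof. by move=> hb; rewrite ffunE inordK // ltnS cwv_le. Qed.

Lemma cwv0 b p : (cwv b p == 0) = (p \in b).
Proof. by rewrite /cwv; case: (p \in b). Qed.

Lemma cw_inj : {in B &, injective cw}.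
Proof.
move=> b b' hb hb' e; apply/setP => p.
by rewrite -!cwv0 -(cwE b p hb) -(cwE b' p hb') e.
Qed.

Lemma cw_wt b : b \in B -> wt (cw b) = s ^ 2.
Proof.
move=> hb; rewrite /wt.
have -> : [set i | nat_of_ord (cw b i) != 0] = ~: b.
  by apply/setP => i; rewrite !inE cwE // cwv0.
have := cardsC b; rewrite card_ord (hB.1 b hb) => h.
have hn' : n = s ^ 2 + (s + 1) by lia.
move: h; move: #|~: b| => u h; lia.
Qed.

Lemma cw_dist b b' : b \in B -> b' \in B -> b != b' -> n - 1 <= hdist (cw b) (cw b').
Proof.
move=> hb hb' hne.
have hsub : [set i | cw b i == cw b' i] \subset b :&: b'.
  apply/subsetP => p; rewrite !inE => /eqP e.
  have e' : cwv b p = cwv b' p by rewrite -(cwE b p hb) -(cwE b' p hb') e.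
  move: e'; rewrite /cwv; case hp: (p \in b); case hp': (p \in b') => //= /eqP.
  rewrite eqSS => /eqP ei; exfalso.
  have hbL : b \in enum (Lp p) by rewrite mem_enum !inE hp hb.
  have hbL' : b' \in enum (Lp p) by rewrite mem_enum !inE hp' hb'.
  move/eqP: hne; apply.
  by rewrite -(nth_index b hbL) ei (nth_index b hbL').
have h1 := leq_trans (subset_leq_card hsub) (F1 b b' hb hb' hne).
have := cardsC [set i | cw b i == cw b' i]; rewrite card_ord.
have -> : ~: [set i | cw b i == cw b' i] = [set i | cw b i != cw b' i].
  by apply/setP => i; rewrite !inE.
rewrite -/(hdist (cw b) (cw b')); lia.
Qed.

Lemma upper : code_exists (s ^ 2).+1 n (s ^ 2) (n - 1) n.
Proof.
exists [set cw b | b in B]; split; first by rewrite card_in_imset ?F2 //; exact: cw_inj.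
split.
  by move=> x /imsetP [b hb ->]; exact: cw_wt.
move=> x y /imsetP [b hb ->] /imsetP [b' hb' ->] hne.
apply: cw_dist => //; apply: contraNneq hne => ->; done.
Qed.

End Steiner.


Theorem mainTheorem19 (s : nat) (hs : 2 <= s)
  (B : {set {set 'I_(s ^ 2 + s + 1)}})
  (hB : steiner_system 2 (s + 1) (s ^ 2 + s + 1) B) :
  is_q0pp 2 (s + 1) (s ^ 2 + s + 1) (s ^ 2 + 1).
Proof.
have hM : 'C(s ^ 2 + s + 1, 2) %/ 'C(s + 1, 2) = s ^ 2 + s + 1.
  by rewrite (Ceq _ s (erefl _) hs) mulnK // bin_gt0; lia.
rewrite /is_q0pp hM.
have e1 : s ^ 2 + s + 1 - (s + 1) = s ^ 2 by lia.
have e2 : s ^ 2 + s + 1 - 2 + 1 = s ^ 2 + s + 1 - 1 by lia.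
rewrite e1 e2; split.
  by rewrite addn1; exact: (upper _ s (erefl _) hs B hB).
move=> q hq [C [hC [hw hd]]].
have := lower_bound _ _ s C (erefl _) hC hw hd; lia.
Qed.
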